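(* Let $g\ge1$, $n=g+1$, $k\in\{1,\dots,g\}$, $\kappa_1,\dots,\kappa_n\in\mathbb C$ pairwise distinct and $\lambda_1,\dots,\lambda_g\in\mathbb C^*$. Let $\tilde A$ be the $k\times n$ matrix $\tilde A=V\cdot\mathrm{diag}(1,\lambda_1,\dots,\lambda_g)$, where $V_{ij}=\kappa_j^{\,i-1}$ ($i\in[k]$, $j\in[n]$). Then the matroid of $\tilde A$ is $\mathcal M_{\mathbf a,v_1}$ for every $\mathbf a\in[\mathbf k]$.
   Context: $B\in\mathbb Z^{g\times n}$ has $B_{i,1}=1$, $B_{i,i+1}=-1$, other entries $0$; $Q=BB^T$. $[\mathbf k]\subset\mathbb R^g$ is the set of vectors with entries in $\{-\tfrac{k}{g+1},\tfrac{g+1-k}{g+1}\}$ having $k$ or $k-1$ entries equal to $\tfrac{g+1-k}{g+1}$ (vertices of the Voronoi polytope of $Q$). For $\mathbf a\in[\mathbf k]$: $\mathcal D_{\mathbf a,Q}=\{\mathbf c\in\mathbb Z^g:\mathbf a^TQ\mathbf a=(\mathbf a-\mathbf c)^TQ(\mathbf a-\mathbf c)\}$; $\mathbf s_{\mathbf a}\in\{0,1\}^n$ has $j$-th entry $0$ if $(B^T\mathbf a)_j>0$ and $1$ if $(B^T\mathbf a)_j<0$; $\mathcal M_{\mathbf a,v_1}$ is the matroid on $[n]$ with bases $\{I,|I|=k:\exists\mathbf c\in\mathcal D_{\mathbf a,Q},\ (B^T\mathbf c+\mathbf s_{\mathbf a})_i=1\ \forall i\in I\}$. The matroid of a $k\times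 n$ matrix has as bases the $k$-subsets of columns with nonzero maximal minor. *)

(* Defs.v *)
From mathcomp Require Import all_boot all_order all_algebra.
From mathcomp Require Export complex.
From mathcomp Require Export Rstruct.
Set Implicit Arguments. Unset Strict Implicit. Unset Printing Implicit Defensive.
Import Order.TTheory GRing.Theory Num.Theory.
Local Open Scope ring_scope.

Definition C := complex Rdefinitions.R.

(* Indices are 0-based: 'I_g for [g], 'I_g.+1 for [n], n = g+1. *)

Definition Bmat (g : nat) : 'M[int]_(g, g.+1) :=
  \matrix_(i < g, j < g.+1)
    (if (j : nat) == 0%N then 1 else if (j : nat) == i.+1 then -1 else 0).

Definition Qmat (g : nat) : 'M[int]_g := Bmat g *m (Bmat g)^T.

Definition Bq (g : nat) : 'M[rat]_(g, g.+1) := map_mx intr (Bmat g).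
Definition Qq (g : nat) : 'M[rat]_g := map_mx intr (Qmat g).

Definition hi_val (g k : nat) : rat := ((g.+1 - k)%N%:R) / (g.+1)%:R.
Definition lo_val (g k : nat) : rat := - (k%:R / (g.+1)%:R).

Definition in_vertex_class (g k : nat) (a : 'cV[rat]_g) : Prop :=
  (forall i : 'I_g, a i 0 = lo_val g k \/ a i 0 = hi_val g k) /\
  (#|[set i : 'I_g | a i 0 == hi_val g k]| = k \/
   #|[set i : 'I_g | a i 0 == hi_val g k]| = k.-1).

Definition qform (g : nat) (x : 'cV[rat]_g) : rat := (x^T *m Qq g *m x) 0 0.

Definition in_D (g : nat) (a : 'cV[rat]_g) (c : 'cV[int]_g) : Prop :=
  qform a = qform (a - map_mx intr c).

(* s_a in {0,1}^n: 0 if (B^T a)_j > 0, 1 if (B^T a)_j < 0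
   ((B^T a)_j is never 0 for a in [k]). *)
Definition s_vec (g : nat) (a : 'cV[rat]_g) : 'cV[int]_(g.+1) :=
  \col_(j < g.+1) (if ((Bq g)^T *m a) j 0 < 0 then 1 else 0).

Definition M_basis (g k : nat) (a : 'cV[rat]_g) (I : {set 'I_g.+1}) : Prop :=
  #|I| = k /\
  exists c : 'cV[int]_g, in_D a c /\
    forall i, i \in I -> ((Bmat g)^T *m c + s_vec a) i 0 = 1.

Definition max_minor (k n : nat) (A : 'M[C]_(k, n.+1)) (I : {set 'I_n.+1}) : C :=
  \det (\matrix_(i < k, j < k) A i (nth ord0 (enum I) j)).

Definition matrix_basis (k n : nat) (A : 'M[C]_(k, n.+1)) (I : {set 'I_n.+1}) : Prop :=
  #|I| = k /\ max_minor A I != 0.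

Definition diag_entry (g : nat) (lambda : 'I_g -> C) (j : 'I_g.+1) : C :=
  match unlift ord0 j with None => 1 | Some j' => lambda j' end.

Definition Vmat (g k : nat) (kappa : 'I_g.+1 -> C) : 'M[C]_(k, g.+1) :=
  \matrix_(i < k, j < g.+1) kappa j ^+ i.

Definition Atilde (g k : nat) (kappa : 'I_g.+1 -> C) (lambda : 'I_g -> C)
  : 'M[C]_(k, g.+1) :=
  Vmat k kappa *m diag_mx (\row_(j < g.+1) diag_entry lambda j).

(* Main.v *)
Require Import Defs.
From mathcomp Require Import all_boot all_order all_algebra.
From mathcomp Require Import ring lra zify.
Import GRing.Theory Num.Theory.
Local Open Scope ring_scope.

Lemma minor_neq0 (g k : nat) (kappa : 'I_g.+1 -> C) (hkappa : injective kappa)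
  (lambda : 'I_g -> C) (hlambda : forall i, lambda i != 0) (I : {set 'I_g.+1}) :
  #|I| = k -> max_minor (@Atilde g k kappa lambda) I != 0.
Proof.
move=> hI.
set f := fun j : 'I_k => nth ord0 (enum I) j.
have finj : injective f.
  have hs : size (enum I) = k by rewrite -cardE hI.
  move=> i j /eqP; rewrite /f nth_uniq ?enum_uniq ?hs //.
  by move/eqP/val_inj.
rewrite /max_minor.
have -> : \matrix_(i < k, j < k) @Atilde g k kappa lambda i (nth ord0 (enum I) j) =
   @Vandermonde C k k (\row_(j < k) kappa (f j)) *m diag_mx (\row_(j < k) diag_entry lambda (f j)).
  apply/matrixP => i j; rewrite /Atilde !mul_mx_diag !mxE.
  by rewrite /Vmat ?mxE.
rewrite det_mulmx det_diag det_Vandermonde mulf_neq0 //.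
  apply/prodf_neq0 => i _; apply/prodf_neq0 => j hij; rewrite !mxE subr_eq0.
  apply/eqP => /hkappa /finj /(congr1 val) /= hv.
  by move: hij; rewrite hv ltnn.
apply/prodf_neq0 => i _; rewrite !mxE /diag_entry.
by case: (unliftP ord0 (f i)) => [j' _|_]; [apply: hlambda | apply: oner_neq0].
Qed.
Lemma BT0 (R : pzRingType) (g : nat) (x : 'cV[R]_g) :
  ((map_mx intr (Bmat g))^T *m x) ord0 0 = \sum_i x i 0.
Proof.
rewrite !mxE; apply: eq_bigr => i _; rewrite !mxE /=.
by rewrite mul1r.
Qed.

Lemma BTl (R : pzRingType) (g : nat) (x : 'cV[R]_g) (i : 'I_g) :
  ((map_mx intr (Bmat g))^T *m x) (lift ord0 i) 0 = - x i 0.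
Proof.
rewrite !mxE (bigD1 i) //= big1 ?addr0.
  by rewrite !mxE /= eqxx mulN1r.
move=> l hl; rewrite !mxE /= eqSS.
rewrite eq_sym -(inj_eq val_inj) in hl; by rewrite (negbTE hl) mul0r.
Qed.

Lemma Bint (g : nat) : map_mx intr (Bmat g) = Bmat g.
Proof. by apply/matrixP => i j; rewrite !mxE intz. Qed.

Lemma qformE (g : nat) (x : 'cV[rat]_g) :
  qform x = \sum_j (((Bq g)^T *m x) j 0) ^+ 2.
Proof.
rewrite /qform /Qq /Qmat map_mxM -map_trmx -/(Bq g).
rewrite mulmxA -mulmxA.
have -> : x^T *m Bq g = ((Bq g)^T *m x)^T by rewrite trmx_mul trmxK.
rewrite mxE.
by apply: eq_bigr => j _; rewrite mxE expr2.
Qed.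

Lemma sum_ind (R : pzSemiRingType) (T : finType) (A : {set T}) :
  \sum_j (if j \in A then 1 else 0 : R) = #|A|%:R.
Proof. by rewrite -big_mkcond /= sumr_const. Qed.

Lemma sum_sq (n : nat) (r : rat) (A : {set 'I_n}) :
  \sum_j (r - (if j \in A then 1 else 0)) ^+ 2 = n%:R * r ^+ 2 - (2 * r - 1) * #|A|%:R.
Proof.
transitivity (\sum_(j < n) (r ^+ 2 - (2 * r - 1) * (if j \in A then 1 else 0))).
  by apply: eq_bigr => j _; case: (j \in A); ring.
rewrite sumrB sumr_const card_ord -mulr_sumr sum_ind mulr_natl.
by rewrite mulr_natl.
Qed.
Section PB.
Import Order.TTheory.
Lemma partB (g k : nat) (hk1 : (1 <= k)%N) (hkg : (k <= g)%N)
  (a : 'cV[rat]_g) (ha : @in_vertex_class g k a) (I : {set 'I_g.+1}) :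
  #|I| = k -> @M_basis g k a I.
Proof.
move=> hI.
set r : rat := k%:R / (g.+1)%:R.
have hn : (g.+1)%:R != 0 :> rat by rewrite pnatr_eq0.
have hn0 : 0 < (g.+1)%:R :> rat by rewrite ltr0n.
have hkr : k%:R = (g%:R + 1) * r.
  by rewrite /r -natr1 mulrC divfK // natr1.
have hr0 : 0 < r by rewrite /r divr_gt0 // ltr0n.
have hr1 : r < 1 by rewrite /r ltr_pdivrMr // mul1r ltr_nat ltnS.
have hhi : hi_val g k = 1 - r.
  by rewrite /hi_val natrB ?(leq_trans hkg) // mulrBl divff.
have hlo : lo_val g k = - r by [].
clearbody r.
set y := (Bq g)^T *m a.
set H := [set i | a i 0 == hi_val g k].
have hai : forall i, a i 0 = - r + (if i \in H then 1 else 0).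
  move=> i; rewrite inE; case: (ha.1 i) => ->.
    rewrite hlo hhi ifN ?addr0 //; apply/eqP => h.
    by have /eqP := addIr (-r) (etrans (add0r (-r)) h); rewrite eq_sym oner_eq0.
  by rewrite eqxx hhi; ring.
have hsum : \sum_i a i 0 = - (g%:R * r) + #|H|%:R.
  rewrite (eq_bigr _ (fun i _ => hai i)) big_split /= sumr_const card_ord sum_ind.
  by rewrite mulNrn mulr_natl.
have hy : forall j, y j 0 = r \/ y j 0 = r - 1.
  move=> j; case: (unliftP ord0 j) => [i ->|->].
    rewrite /y BTl hai; case: (i \in H); [right|left]; ring.
  rewrite /y BT0 hsum; case: ha.2 => ->.
    by left; rewrite hkr; ring.
  right; idtac.
  have hkr' : (k.-1)%:R = (g%:R + 1) * r - 1.
    by rewrite -hkr -[in RHS](prednK hk1) -natr1; ring.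
  by rewrite hkr'; ring.
set S := [set j | y j 0 < 0].
have hyS : forall j, y j 0 = r - (if j \in S then 1 else 0).
  move=> j; rewrite inE; case: (hy j) => ->.
    by rewrite ltNge ltW //= subr0.
  by rewrite ifT ?subr_lt0.
have hsumy : \sum_j y j 0 = 0.
  rewrite big_ord_recl /y /Bq BT0.
  rewrite [X in _ + X](eq_bigr (fun i => - a i 0)); last by move=> i _; exact: (@BTl rat g a i).
  by rewrite sumrN subrr.
have hSk : #|S| = k.
  move: hsumy; rewrite (eq_bigr _ (fun j _ => hyS j)) sumrB sumr_const card_ord sum_ind.
  rewrite ?mulr1 -(mulr_natl r).
  have -> : (g.+1)%:R * r = k%:R by rewrite hkr -natr1.
  by move/eqP; rewrite subr_eq0 eq_sym eqr_nat => /eqP.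
pose c : 'cV[int]_g := \col_(i < g) ((if lift ord0 i \in S then 1 else 0) - (if lift ord0 i \in I then 1 else 0)).
have hBc : forall j, ((Bmat g)^T *m c) j 0 = (if j \in I then 1 else 0) - (if j \in S then 1 else 0).
  move=> j; rewrite -Bint; case: (unliftP ord0 j) => [i ->|->].
    by rewrite BTl mxE opprB.
  rewrite BT0.
  under eq_bigr do rewrite mxE.
  rewrite sumrB.
  have := sum_ind int _ S; have := sum_ind int _ I.
  rewrite !big_ord_recl hI hSk.
  set X := \sum_(i < g) (if lift ord0 i \in S then 1 else 0).
  set Y := \sum_(i < g) (if lift ord0 i \in I then 1 else 0).
  move: X Y => X Y.
  rewrite !natz.
  by case: (ord0 \in I); case: (ord0 \in S) => /= h1 h2; lia.
have hs : forall j, s_vec a j 0 = if j \in S then 1 else 0.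
  by move=> j; rewrite /s_vec mxE inE.
split => //; exists c; split.
  rewrite /in_D !qformE -/y.
  under eq_bigr do rewrite hyS.
  rewrite sum_sq hSk.
  have hz : forall j, ((Bq g)^T *m (a - map_mx intr c)) j 0 = r - (if j \in I then 1 else 0).
    move=> j; rewrite mulmxBr mxE -/y hyS.
    have -> : (Bq g)^T *m map_mx intr c = map_mx intr ((Bmat g)^T *m c).
      by rewrite map_mxM /Bq map_trmx.
    have hm : forall M : 'cV[int]_(g.+1), (map_mx intr M) j 0 = (M j 0)%:~R :> rat by move=> M; rewrite mxE.
    rewrite mxE hm hBc.
    by case: (j \in I); case: (j \in S); rewrite /=; ring.
  under eq_bigr do rewrite hz.
  by rewrite sum_sq hI.
move=> i hi; rewrite mxE hBc hs hi.
by rewrite subrK.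
Qed.
End PB.

Theorem proposition5p6 (g k : nat) (hg : (1 <= g)%N) (hk1 : (1 <= k)%N) (hkg : (k <= g)%N)
  (kappa : 'I_g.+1 -> C) (hkappa : injective kappa)
  (lambda : 'I_g -> C) (hlambda : forall i, lambda i != 0)
  (a : 'cV[rat]_g) (ha : @in_vertex_class g k a) :
  forall I : {set 'I_g.+1}, matrix_basis (@Atilde g k kappa lambda) I <-> @M_basis g k a I.
Proof.
move=> I; split.
  by case=> hI _; exact: partB.
case=> hI _; split => //.
exact: minor_neq0.
Qed.
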